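(* For every integer $n>1$, $\mathrm{Log}_{>1}(\mathbb{R})\not\subseteq \mathrm{Log}_{>1}(\mathbb{R}^n)$.
   Context: Modal formulas are built from a countable set of propositional variables using $\bot$, $\to$ and one unary modality $\lozenge$; $\Box\varphi$ abbreviates $\neg\lozenge\neg\varphi$. A frame is a pair $(X,R)$ with $R\subseteq X\times X$; a valuation assigns to each variable a subset of $X$; truth is defined as usual, with $x\models\lozenge\varphi$ iff there is $y$ with $xRy$ and $y\models\varphi$. A formula is valid in a frame if it is true at every point under every valuation. For a metric space $(X,d)$, the farness frame is $(X,R_{>1})$ where $x R_{>1} y$ iff $d(x,y)>1$, and $\mathrm{Log}_{>1}(X)$ denotes the set of modal formulas valid in this frame. $\mathbb{R}^n$ carries the Euclidean metric. *)

(* Defs.v *)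
From HB Require Import structures.
From mathcomp Require Import all_boot all_order all_algebra.
From mathcomp Require Import Rstruct.
From Stdlib Require Import Reals.

Set Implicit Arguments.
Unset Strict Implicit.
Unset Printing Implicit Defensive.

Import Order.TTheory GRing.Theory Num.Theory.

Inductive mform : Type :=
  | Var : nat -> mform
  | Bot : mform
  | Imp : mform -> mform -> mform
  | Dia : mform -> mform.

Definition Neg (p : mform) : mform := Imp p Bot.
Definition Box (p : mform) : mform := Neg (Dia (Neg p)).

Fixpoint sat (X : Type) (Rel : X -> X -> Prop) (V : nat -> X -> Prop)
    (x : X) (p : mform) : Prop :=
  match p with
  | Var k => V k x
  | Bot => False
  | Imp p q => sat Rel V x p -> sat Rel V x q
  | Dia p => exists y, Rel x y /\ sat Rel V y p
  end.

Definition valid_in_frame (X : Type) (Rel : X -> X -> Prop) (p : mform) : Prop :=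
  forall (V : nat -> X -> Prop) (x : X), sat Rel V x p.

Local Open Scope ring_scope.

Definition far_rel (X : Type) (d : X -> X -> R) : X -> X -> Prop :=
  fun x y => 1 < d x y.

Definition Log_far (X : Type) (d : X -> X -> R) : mform -> Prop :=
  fun p => valid_in_frame (far_rel d) p.

Definition dist_R (x y : R) : R := `|x - y|.

Definition Rn (n : nat) : Type := 'I_n -> R.

Definition dist_Rn (n : nat) (x y : Rn n) : R :=
  Num.sqrt (\sum_(i < n) (x i - y i) ^+ 2).

(* Main.v *)
Require Import Defs.
From mathcomp Require Import all_boot all_order all_algebra.
From mathcomp Require Import Rstruct.
From Stdlib Require Import Reals.
From Stdlib Require Import Classical.
From mathcomp Require Import lra.

Import Order.TTheory GRing.Theory Num.Theory.
Local Open Scope ring_scope.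

Definition G (p : mform) : mform := Box (Box p).
Definition pa := Var 0. Definition pb := Var 1.
Definition pc := Var 2. Definition pd := Var 3.

Definition phi : mform :=
  Imp (G (Imp pa (Box (Neg pb))))
  (Imp (G (Imp pb (Box (Neg pc))))
  (Imp (G (Imp pc (Box (Neg pd))))
  (Imp (G (Imp pd (Box (Neg pa))))
  (Imp (G (Imp pa (Dia pc)))
  (Imp (G (Imp pb (Dia pd)))
  (Imp (Dia (Dia pa))
  (Imp (Dia (Dia pb)) Bot))))))).

Lemma G_everywhere (V : nat -> R -> Prop) (x : R) (p : mform) :
  sat (far_rel dist_R) V x (G p) -> forall y, sat (far_rel dist_R) V y p.
Proof.
move=> H y.
set z := `|x| + `|y| + 2.
have Hxz : far_rel dist_R x z.
  rewrite /far_rel /dist_R /z.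
  have := ler_norm x; have := ler_norm (- x); rewrite normrN => h1 h2.
  have h3 := normr_ge0 y.
  rewrite ltr_normr; apply/orP; right; lra.
have Hzy : far_rel dist_R z y.
  rewrite /far_rel /dist_R /z.
  have := ler_norm y; have := ler_norm (- y); rewrite normrN => h1 h2.
  have h3 := normr_ge0 x.
  rewrite ltr_normr; apply/orP; left; lra.
apply: NNPP => Hn; apply: H; exists z; split => // Hb.
apply: Hb; exists y; split => //.
Qed.

Lemma box_neg (V : nat -> R -> Prop) (x : R) (k : nat) :
  sat (far_rel dist_R) V x (Box (Neg (Var k))) ->
  forall y, V k y -> ~ far_rel dist_R x y.
Proof. move=> H y Hy Hf; apply: H; exists y; split => //=; tauto. Qed.

Lemma notfar (x y : R) : ~ far_rel dist_R x y -> -1 <= x - y <= 1.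
Proof.
rewrite /far_rel /dist_R => H; rewrite -ler_norml.
by rewrite leNgt; apply/negP.
Qed.

Lemma far (x y : R) : far_rel dist_R x y -> (1 < x - y) \/ (x - y < -1).
Proof.
rewrite /far_rel /dist_R ltr_normr => /orP [h|h]; [left => // | right; lra].
Qed.

Lemma phi_valid_R : Log_far dist_R phi.
Proof.
move=> V x; rewrite /phi; cbn [sat]; move=> h1 h2 h3 h4 h5 h6 h7 h8.
have g1 := @G_everywhere _ _ _ h1; have g2 := @G_everywhere _ _ _ h2.
have g3 := @G_everywhere _ _ _ h3; have g4 := @G_everywhere _ _ _ h4.
have g5 := @G_everywhere _ _ _ h5; have g6 := @G_everywhere _ _ _ h6.
case: h7 => [z1 [_ [a0 [_ Ha]]]].
case: h8 => [z2 [_ [b0 [_ Hb]]]].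
have [c0 [Hac Hc]] := g5 a0 Ha.
have [d0 [Hbd Hd]] := g6 b0 Hb.
have c1 := @notfar _ _ (@box_neg _ _ _ (g1 a0 Ha) _ Hb).
have c2 := @notfar _ _ (@box_neg _ _ _ (g2 b0 Hb) _ Hc).
have c3 := @notfar _ _ (@box_neg _ _ _ (g3 c0 Hc) _ Hd).
have c4 := @notfar _ _ (@box_neg _ _ _ (g4 d0 Hd) _ Ha).
move: c1 c2 c3 c4 => /andP [c1 c1'] /andP [c2 c2'] /andP [c3 c3'] /andP [c4 c4'].
case: (@far _ _ Hac) => f1; case: (@far _ _ Hbd) => f2; lra.
Qed.

Section Rn.
Variable m : nat.
Definition pt (u v : R) : Rn m.+2 :=
  fun i => if (val i == 0)%N then u else if (val i == 1)%N then v else GRing.zero.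

Lemma dist_pt u v u' v' :
  dist_Rn (pt u v) (pt u' v') = Num.sqrt ((u - u') ^+ 2 + (v - v') ^+ 2).
Proof.
rewrite /dist_Rn big_ord_recl big_ord_recl big1 ?addr0 //.
by move=> i _; rewrite /pt /= subrr expr0n.
Qed.

Lemma far_pt u v u' v' :
  0 < (u - u') ^+ 2 + (v - v') ^+ 2 ->
  far_rel (@dist_Rn m.+2) (pt u v) (pt u' v') <-> 1 < (u - u') ^+ 2 + (v - v') ^+ 2.
Proof.
by move=> h; rewrite /far_rel dist_pt -{1}sqrtr1 ltr_sqrt.
Qed.
End Rn.
Arguments far_pt {m u v u' v'}.
Arguments pt m (u v)%_ring_scope.

Definition Vn m (k : nat) (y : Rn m.+2) : Prop :=
  match k with
  | 0%N => y = pt m 0 0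
  | 1%N => y = pt m 1 0
  | 2%N => y = pt m 1 1
  | _ => y = pt m 0 1
  end.

Lemma phi_fails m : ~ Log_far (@dist_Rn m.+2) phi.
Proof.
move=> H; have := H (@Vn m) (pt m 0 0); rewrite /phi; cbn [sat].
have close : forall u v u' v', (u - u') ^+ 2 + (v - v') ^+ 2 = 1 ->
   ~ far_rel (@dist_Rn m.+2) (pt m u v) (pt m u' v').
  move=> u v u' v' e hf.
  have h0 : 0 < (u - u') ^+ 2 + (v - v') ^+ 2 by rewrite e ltr01.
  by move: hf; move/(far_pt h0); rewrite e ltxx.
have Gall : forall p, (forall y, sat (far_rel (@dist_Rn m.+2)) (@Vn m) y p) ->
   forall x, sat (far_rel (@dist_Rn m.+2)) (@Vn m) x (G p).
  move=> p hp x [z [_ hz]]; apply: hz => [[w [_ hw]]]; exact: hw (hp w).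
have bn : forall (k : nat) (y : Rn m.+2), (forall w, Vn m k w -> ~ far_rel (@dist_Rn m.+2) y w) ->
   sat (far_rel (@dist_Rn m.+2)) (@Vn m) y (Box (Neg (Var k))).
  by move=> k y hk [w [hf hn]]; apply: hn => hv; exact: hk w hv hf.
move=> h; apply: h.
- apply: Gall => y hy; apply: bn => w hw; move: hy hw => /= -> ->; apply: close; lra.
- apply: Gall => y hy; apply: bn => w hw; move: hy hw => /= -> ->; apply: close; lra.
- apply: Gall => y hy; apply: bn => w hw; move: hy hw => /= -> ->; apply: close; lra.
- apply: Gall => y hy; apply: bn => w hw; move: hy hw => /= -> ->; apply: close; lra.
- apply: Gall => y /= ->; exists (pt m 1 1); split => //; apply/far_pt; lra.
- apply: Gall => y /= ->; exists (pt m 0 1); split => //; apply/far_pt; lra.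
- exists (pt m 3 0); split; first by apply/far_pt; lra.
  exists (pt m 0 0); split => //; apply/far_pt; lra.
- exists (pt m 3 0); split; first by apply/far_pt; lra.
  exists (pt m 1 0); split => //; apply/far_pt; lra.
Qed.

Local Close Scope ring_scope.
Theorem proposition3p1 (n : nat) (hn : (1 < n)%N) :
  ~ (forall p : mform, Log_far dist_R p -> Log_far (@dist_Rn n) p).
Proof.
case: n hn => [|[|m]] // _ H.
exact: (@phi_fails m (H phi phi_valid_R)).
Qed.
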